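(* Let $K,d\ge 1$ be integers and let $X\in\mathbb{R}^{K\times d}$ have rows $x_1,\dots,x_K\in\mathbb{R}^d$ that are affinely dependent, i.e. there exists a nonzero $\psi\in\mathbb{R}^K$ with $\sum_{i=1}^K\psi_i=0$ and $\sum_{i=1}^K\psi_i x_i=0$. Define $f:\Delta^K\to\Delta^d$ by $f(\alpha)=\operatorname{softmax}(\alpha^{T}X)$, where $\operatorname{softmax}(v)_c=e^{v_c}/\sum_{c'=1}^d e^{v_{c'}}$. Then $f$ is not injective.
   Context: $\Delta^K=\{\alpha\in\mathbb{R}^K:\alpha_i\ge 0,\ \sum_i\alpha_i=1\}$ denotes the probability simplex; $\alpha^T X\in\mathbb{R}^d$ is the convex combination $\sum_i\alpha_i x_i$ of the rows of $X$. *)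

(* Defs.v *)
From HB Require Import structures.
From mathcomp Require Import all_boot all_order all_algebra.
From mathcomp Require Import all_classical all_reals.
From mathcomp Require Import sequences exp.
Set Implicit Arguments. Unset Strict Implicit. Unset Printing Implicit Defensive.
Import Order.TTheory GRing.Theory Num.Theory.
Local Open Scope ring_scope.

Definition simplex (R : realType) (n : nat) (a : 'rV[R]_n) : Prop :=
  (forall i, 0 <= a 0 i) /\ \sum_(i < n) a 0 i = 1.

Definition softmax (R : realType) (n : nat) (v : 'rV[R]_n) : 'rV[R]_n :=
  \row_(c < n) (expR (v 0 c) / \sum_(c' < n) expR (v 0 c')).

(* f(alpha) = softmax(alpha^T X) ; alpha^T X = sum_i alpha_i x_i = alpha *m X *)
Definition smap (R : realType) (K d : nat) (X : 'M[R]_(K, d)) (a : 'rV[R]_K)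
  : 'rV[R]_d := softmax (a *m X).

(* Main.v *)
Require Import Defs.
From HB Require Import structures.
From mathcomp Require Import all_boot all_order all_algebra.
From mathcomp Require Import all_classical all_reals.
From mathcomp Require Import sequences exp.
From mathcomp Require Import lra.
Import Order.TTheory GRing.Theory Num.Theory.
Local Open Scope ring_scope.

Theorem mainTheorem2 (R : realType) (K d : nat) (hK : (1 <= K)%N) (hd : (1 <= d)%N)
  (X : 'M[R]_(K, d))
  (hdep : exists psi : 'rV[R]_K, psi != 0 /\ \sum_(i < K) psi 0 i = 0 /\
            \sum_(i < K) psi 0 i *: row i X = 0) :
  ~ (forall a b : 'rV[R]_K, simplex a -> simplex b -> smap X a = smap X b -> a = b).
Proof.
move=> inj; case: hdep => psi [psi0 [s0 sX]].
set M := \sum_(i < K) `|psi 0 i|.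
have Kpos : 0 < K%:R :> R by rewrite ltr0n.
have leM : forall i, `|psi 0 i| <= M.
  move=> i; rewrite /M (bigD1 i) //= lerDl; exact: sumr_ge0.
have Mpos : 0 < M.
  case: (ltrP 0 M) => // HM; exfalso; move/negP: psi0; apply; apply/eqP.
  apply/rowP => j; rewrite mxE; apply/eqP; rewrite -normr_eq0 eq_le normr_ge0 andbT.
  exact: le_trans (leM j) HM.
pose t : R := (K%:R * M)^-1.
have tpos : 0 < t by rewrite invr_gt0 mulr_gt0.
pose a : 'rV[R]_K := const_mx ((K%:R : R)^-1).
have sa : simplex a.
  split=> [i|]; first by rewrite mxE invr_ge0 ltW.
  under eq_bigr do rewrite mxE.
  by rewrite sumr_const card_ord -[LHS]mulr_natr mulVf // gt_eqF.
have sb : simplex (a + t *: psi).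
  split=> [i|].
    rewrite !mxE.
    have h1 : t * `|psi 0 i| <= K%:R^-1.
      apply: le_trans (ler_wpM2l (ltW tpos) (leM i)) _.
      by rewrite /t invfM -mulrA mulVf ?gt_eqF // mulr1.
    have h2 : - (t * `|psi 0 i|) <= t * psi 0 i.
      rewrite -mulrN ler_wpM2l ?(ltW tpos) //.
      by rewrite lerNl; rewrite -normrN; apply: ler_norm.
    apply: (le_trans (_ : 0 <= K%:R^-1 - t * `|psi 0 i|)); first by rewrite subr_ge0.
    by rewrite lerD2l.
  under eq_bigr do rewrite !mxE.
  rewrite big_split /= -mulr_sumr s0 mulr0 addr0.
  by rewrite sumr_const card_ord -[LHS]mulr_natr mulVf // gt_eqF.
have E := inj _ _ sa sb.
have : smap X a = smap X (a + t *: psi).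
  by rewrite /smap mulmxDl -scalemxAl (mulmx_sum_row psi) sX scaler0 addr0.
move=> /E /eqP; rewrite -subr_eq0 opprD addrA subrr add0r oppr_eq0 scaler_eq0.
by rewrite (negbTE psi0) gt_eqF.
Qed.
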